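(* Let $X$ be an infinite h-homogeneous zero-dimensional compact Hausdorff space, let $\upsilon\in\Phi(X)$ and let $\tilde\alpha=\{A_1,\dots,A_m\}$ be a finite partition of $X$ into nonempty clopen sets. Then the relation $<_{\upsilon}$ on $\tilde\alpha$ defined by $A_i<_\upsilon A_j \iff (A_i)_\upsilon\subseteq (A_j)_\upsilon$ is a linear order on $\tilde\alpha$. Moreover, if $A_{i_1}<_\upsilon A_{i_2}<_\upsilon\dots<_\upsilon A_{i_m}$ is this ordering, then for each $k=1,\dots,m$ there is a point $x_k\in A_{i_k}$ with $(A_{i_k})_\upsilon\setminus (A_{i_1}\cup\dots\cup A_{i_{k-1}})^\upsilon=\{x_k\}$ (for $k=1$ the union is empty and the set subtracted is $\emptyset$).
   Context: h-homogeneous: every nonempty clopen subset of $X$ is homeomorphic to $X$. $\Phi(X)$ is the set of maximal chains (maximal families of nonempty closed subsets of $X$ totally ordered by inclusion). For $\upsilon\in\Phi(X)$ and a closed $D\subset X$: if $D\ne\emptyset$, $D_\upsilon=\bigcap\{A\in\upsilon: A\cap D\neq\emptyset\}$ (the least element of $\upsilon$ meeting $D$); and $D^\upsilon=\overline{\bigcup\{A\in\upsilon: A\subset D\}}$ (the largest element of $\upsilon$ contained in $D$ when the root of $\upsilon$ lies in $D$). *)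

(* Defs.v *)
From HB Require Import structures.
From mathcomp Require Import all_boot all_order all_algebra.
From mathcomp Require Import all_classical all_reals all_analysis.
Set Implicit Arguments. Unset Strict Implicit. Unset Printing Implicit Defensive.
Local Open Scope classical_set_scope.

Definition clopen_base (X : topologicalType) : Prop :=
  forall (U : set X) (x : X), open U -> U x ->
    exists V : set X, [/\ clopen V, V x & V `<=` U].

(* U (with the subspace topology) is homeomorphic to X: there are maps
   f : U -> X and g : X -> U, mutually inverse, both continuous. *)
Definition homeomorphic_to_space (X : topologicalType) (U : set X) : Prop :=
  exists f g : X -> X,
    [/\ {within U, continuous f}, continuous g,
        (forall y, U (g y)),
        (forall x, U x -> g (f x) = x) &
        (forall y, f (g y) = y)].

Definition h_homogeneous (X : topologicalType) : Prop :=
  forall U : set X, clopen U -> U !=set0 -> homeomorphic_to_space U.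

Definition closed_chain (X : topologicalType) (c : set (set X)) : Prop :=
  (forall A, c A -> closed A /\ A !=set0) /\
  (forall A B, c A -> c B -> A `<=` B \/ B `<=` A).

Definition maximal_chain (X : topologicalType) (c : set (set X)) : Prop :=
  closed_chain c /\ (forall d, closed_chain d -> c `<=` d -> d = c).

Definition chain_lower (X : topologicalType) (u : set (set X)) (D : set X) : set X :=
  \bigcap_(A in [set A | u A /\ A `&` D !=set0]) A.

Definition chain_upper (X : topologicalType) (u : set (set X)) (D : set X) : set X :=
  closure (\bigcup_(A in [set A | u A /\ A `<=` D]) A).

(* Main.v *)
Require Import Defs.
From HB Require Import structures.
From mathcomp Require Import all_boot all_order all_algebra.
From mathcomp Require Import all_classical all_reals all_analysis.
Local Open Scope classical_set_scope.

Lemma add_chain {X : topologicalType} {u : set (set X)} :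
  maximal_chain u -> forall C, closed C -> C !=set0 ->
  (forall B, u B -> B `<=` C \/ C `<=` B) -> u C.
Proof.
move=> [[hcl hch] hmax] C cC neC cmp.
have cd : closed_chain (u `|` [set C]).
  split.
  - by move=> A [/hcl//|->].
  - move=> A B [uA|->] [uB|->].
    + exact: hch.
    + exact: cmp.
    + by case: (cmp _ uB) => h; [right|left].
    + by left.
have := hmax _ cd (@subsetUl _ u [set C]).
by move=> <-; right.
Qed.

Lemma lower_min (X : topologicalType) (u : set (set X)) D B :
  u B -> B `&` D !=set0 -> chain_lower u D `<=` B.
Proof. by move=> uB BD x Lx; apply: Lx; split. Qed.

Lemma lower_in {X : topologicalType} {u : set (set X)} :
  maximal_chain u -> compact [set: X] -> forall D, closed D -> D !=set0 ->
  u (chain_lower u D) /\ chain_lower u D `&` D !=set0.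
Proof.
move=> hu hc D cD [d Dd].
have [[hcl hch] _] := hu.
have uT : u setT.
  apply: (add_chain hu); [exact: closedT | by exists d | by move=> B _; left].
pose I := [set A | u A /\ A `&` D !=set0].
have IT : I setT by split => //; exists d.
pose F := filter_from I (fun A => A `&` D).
have Fflt : Filter F.
  apply: filter_from_filter; first by exists setT.
  move=> A B IA IB; have [uA _] := IA; have [uB _] := IB.
  case: (hch A B uA uB) => AB; [exists A => // | exists B => //];
    move=> x [Ax Dx]; (split; split=> //); exact: AB.
have PF : ProperFilter F by apply: filter_from_proper => // A [].
have [p [_ clp]] := hc F PF (@filterT _ F _).
have pI : forall A, I A -> (A `&` D) p.
  move=> A IA; have [uA AD] := IA.
  have cAD : closed (A `&` D) by apply: closedI => //; have [] := hcl A uA.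
  rewrite [X in X p](closure_id (A `&` D)).1 // => B nB; apply: clp => //; exists A => //.
have Cp : chain_lower u D p by move=> A IA; exact (pI A IA).1.
split; last by exists p; split => //; exact (pI _ IT).2.
apply: (add_chain hu); first by apply: closed_bigI => A [uA _]; have [] := hcl A uA.
  by exists p.
move=> B uB; case: (pselect (B `&` D !=set0)) => BD.
  by right; exact: lower_min.
left => x Bx A [uA AD]; case: (hch A B uA uB) => AB; last exact: AB.
by exfalso; apply: BD; case: AD => y [Ay Dy]; exists y; split => //; exact: AB.
Qed.

Definition Cm {X : topologicalType} (u : set (set X)) (C : set X) :=
  closure (\bigcup_(B in [set B | u B /\ B `<=` C /\ ~ (C `<=` B)]) B).

Lemma gap {X : topologicalType} {u : set (set X)} :
  maximal_chain u -> hausdorff_space X -> forall C D, u C -> open D ->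
  C `&` D !=set0 -> (forall B, u B -> ~ (C `<=` B) -> B `&` D = set0) ->
  exists x, C `\` Cm u C = [set x] /\ C `&` D `<=` [set x].
Proof.
move=> hu hT C D uC oD [x [Cx Dx]] hB.
have [[hcl hch] _] := hu.
have cC : closed C by have [] := hcl C uC.
have CmC : Cm u C `<=` C.
  rewrite [X in _ `<=` X](closure_id C).1 //; apply: closureS.
  by move=> y [B [_ [BC _]] By]; exact: BC.
have CmD : forall y, Cm u C y -> ~ D y.
  move=> y Cy Dy.
  have /Cy [z [[B [uB [_ nCB]] Bz] Dz]] : nbhs y D by apply: open_nbhs_nbhs.
  have : (B `&` D) z by split.
  by rewrite hB.
have xC : (C `\` Cm u C) x by split => // /CmD; apply.
have acc : forall y : X, closed [set y].
  by apply: accessible_closed_set1; apply: hausdorff_accessible.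
have key : C `\` Cm u C `<=` [set x].
  move=> y [Cy nCmy]; apply: contrapT => nyx.
  pose E := Cm u C `|` [set x].
  have uE : u E.
    apply: (add_chain hu).
    - apply: closedU; [exact: closed_closure | exact: acc].
    - by exists x; right.
    - move=> B uB; case: (pselect (C `<=` B)) => CB.
        by right => z [/CmC Cz| ->]; exact: CB.
      case: (hch B C uB uC) => BC; last by exfalso; exact: CB BC.
      left => z Bz; left; apply: subset_closure; exists B => //.
  have nCE : ~ (C `<=` E) by move=> /(_ y Cy) [/nCmy|/nyx].
  have ECm : E `<=` Cm u C.
    move=> z Ez; apply: subset_closure; exists E => //; split=> //; split => //.
    by move=> z' [/CmC //| ->].
  by have := xC.2 (ECm x (or_intror erefl)).
exists x; split.
  apply/seteqP; split; first exact: key.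
  by move=> y ->.
move=> z [Cz Dz]; apply: key; split => //.
by move=> /CmD /(_ Dz).
Qed.

Theorem proposition3p3 (X : topologicalType)
  (hT2 : hausdorff_space X) (hcpt : compact [set: X])
  (hzd : clopen_base X) (hinf : infinite_set [set: X])
  (hh : h_homogeneous X)
  (u : set (set X)) (hu : maximal_chain u)
  (m : nat) (A : 'I_m -> set X)
  (hAclopen : forall i, clopen (A i))
  (hAne : forall i, A i !=set0)
  (hAdisj : forall i j, i != j -> A i `&` A j = set0)
  (hAcover : \bigcup_(i in [set: 'I_m]) A i = [set: X]) :
  (* <_u is a linear order on the partition *)
  (forall i, chain_lower u (A i) `<=` chain_lower u (A i)) /\
  (forall i j k, chain_lower u (A i) `<=` chain_lower u (A j) ->
     chain_lower u (A j) `<=` chain_lower u (A k) ->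
     chain_lower u (A i) `<=` chain_lower u (A k)) /\
  (forall i j, chain_lower u (A i) `<=` chain_lower u (A j) ->
     chain_lower u (A j) `<=` chain_lower u (A i) -> i = j) /\
  (forall i j, chain_lower u (A i) `<=` chain_lower u (A j) \/
     chain_lower u (A j) `<=` chain_lower u (A i)) /\
  (* the description of the ordering A_{s 0} < ... < A_{s (m-1)} *)
  (forall s : 'I_m -> 'I_m, bijective s ->
     (forall k l : 'I_m, (k < l)%N ->
        chain_lower u (A (s k)) `<=` chain_lower u (A (s l))) ->
     forall k : 'I_m, exists x : X,
       A (s k) x /\
       chain_lower u (A (s k)) `\`
         chain_upper u (\bigcup_(l in [set l : 'I_m | (l < k)%N]) A (s l))
       = [set x]).
Proof.
have [[hcl hch] _] := hu.
have cover : forall y, exists i, A i y.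
  move=> y; have : (\bigcup_(i in [set: 'I_m]) A i) y by rewrite hAcover.
  by case=> i _ Ai; exists i.
have Lu : forall i, u (chain_lower u (A i)) /\ chain_lower u (A i) `&` A i !=set0.
  move=> i; apply: lower_in; [exact: hu | exact: hcpt | by case: (hAclopen i) | exact: hAne].
have Gx : forall i, exists x, A i x /\
    chain_lower u (A i) `\` Cm u (chain_lower u (A i)) = [set x].
  move=> i; have [uL LA] := Lu i.
  have [|x [Ex Sx]] := gap hu hT2 _ _ uL (proj1 (hAclopen i)) LA.
    move=> B uB nLB; case: (pselect (B `&` A i !=set0)) => h.
      by exfalso; apply: nLB; exact: lower_min.
    apply/seteqP; split; last exact: sub0set.
    by move=> z Bz; exfalso; apply: h; exists z.
  exists x; split => //.
  by have [z Lz] := LA; have := Sx z Lz; move=> e; rewrite -e; exact: Lz.2.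
split; first by move=> i x.
split; first by move=> i j k ij jk; exact: subset_trans ij jk.
split.
  move=> i j ij ji; case: (eqVneq i j) => // nij; exfalso.
  have Lij : chain_lower u (A i) = chain_lower u (A j) by apply/seteqP; split.
  have [xi [Axi Si]] := Gx i; have [xj [Axj Sj]] := Gx j.
  rewrite Lij Sj in Si.
  have : [set xj] xj by [].
  rewrite Si => e.
  have : (A i `&` A j) xi by split => //; rewrite -e.
  by rewrite hAdisj.
split.
  by move=> i j; exact: hch (Lu i).1 (Lu j).1.
move=> s [g sg gs] mono k.
have [x [Ax Sx]] := Gx (s k); exists x; split => //.
have Cx : chain_lower u (A (s k)) x.
  by have : [set x] x by []; rewrite -Sx => -[].
suff -> : chain_upper u (\bigcup_(l in [set l : 'I_m | (l < k)%N]) A (s l)) =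
    Cm u (chain_lower u (A (s k))) by [].
apply/seteqP; split; apply: closureS => y [B PB By]; exists B => //.
  case: PB => uB BU.
  have nCB : ~ (chain_lower u (A (s k)) `<=` B).
    move=> /(_ x Cx) /BU [l lk Al].
    have nl : s l != s k.
      apply/eqP => e; have := congr1 g e; rewrite !sg => lk'.
      by move: lk; rewrite lk' /= ltnn.
    have : (A (s l) `&` A (s k)) x by split.
    by rewrite hAdisj.
  split => //; split => //.
  by case: (hch B _ uB (Lu (s k)).1).
case: PB => uB [BC nCB]; split => // y' By'.
have [i Ai] := cover y'.
exists (g i); last by rewrite gs.
rewrite /=; case: (ltnP (g i) k) => // kl; exfalso; apply: nCB.
have LB : chain_lower u (A (s (g i))) `<=` B.
  by apply: lower_min => //; exists y'; rewrite gs.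
apply: subset_trans LB.
move: kl; rewrite leq_eqVlt => /orP [/eqP e|lt].
  by have -> : k = g i by apply: val_inj.
exact: mono.
Qed.
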